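(* Let $\mathcal A=(a_{ij})$ be a symmetric $3\times3$ matrix (indices $0,1,2$) and let $\mathcal B$ be the symmetric matrix with $b_{11}=1$ and all other entries $0$. Let $\mathbf V(s,t)=(s^2,st,t^2)^T$, $\mathbf F(s,t)=(\mathcal A\mathbf V(s,t))\times(\mathcal B\mathbf V(s,t))=(F^{(1)},F^{(2)},F^{(3)})^T$, $Q(s,t)=(F^{(2)})^2-F^{(1)}F^{(3)}$. Put $a_1=a_{00}$, $a_2=a_{01}$, $a_3=a_{02}$, $a_5=a_{12}$, $a_6=a_{22}$, and let $(k_n,l_n)$ be a sequence of nonzero numbers satisfying $$k_{n+1}k_{n-1}=a_3k_n^2+a_5k_nl_n+a_6l_n^2,\qquad l_{n+1}l_{n-1}=a_1k_n^2+a_2k_nl_n+a_3l_n^2 .$$ Then $r_n=-k_{n+1}l_{n+1}k_nl_n$, $s_n=k_n$, $t_n=l_n$ satisfy the system $$r_nr_{n-1}=Q(s_n,t_n),\quad s_{n+1}r_{n-1}=t_{n-1}F^{(1)}(s_n,t_n)-s_{n-1}F^{(2)}(s_n,t_n),\quad t_{n+1}r_{n-1}=t_{n-1}F^{(2)}(s_n,t_n)-s_{n-1}F^{(3)}(s_n,t_n).$$ *)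

(* Defs.v *)
From HB Require Import structures.
From mathcomp Require Import all_boot all_order all_algebra.
Set Implicit Arguments. Unset Strict Implicit. Unset Printing Implicit Defensive.
Import GRing.Theory.
Local Open Scope ring_scope.

Definition i0 : 'I_3 := @Ordinal 3 0 isT.
Definition i1 : 'I_3 := @Ordinal 3 1 isT.
Definition i2 : 'I_3 := @Ordinal 3 2 isT.

Definition Bmx (R : fieldType) : 'M[R]_3 := delta_mx i1 i1.

Definition Vvec (R : fieldType) (s t : R) : 'cV[R]_3 :=
  \col_i (if i == i0 then s ^+ 2 else if i == i1 then s * t else t ^+ 2).

Definition cross (R : fieldType) (u v : 'cV[R]_3) : 'cV[R]_3 :=
  \col_i (if i == i0 then u i1 0 * v i2 0 - u i2 0 * v i1 0
          else if i == i1 then u i2 0 * v i0 0 - u i0 0 * v i2 0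
          else u i0 0 * v i1 0 - u i1 0 * v i0 0).

Definition Fvec (R : fieldType) (A : 'M[R]_3) (s t : R) : 'cV[R]_3 :=
  cross (A *m Vvec s t) (Bmx R *m Vvec s t).

Definition F1 (R : fieldType) (A : 'M[R]_3) s t := Fvec A s t i0 0.
Definition F2 (R : fieldType) (A : 'M[R]_3) s t := Fvec A s t i1 0.
Definition F3 (R : fieldType) (A : 'M[R]_3) s t := Fvec A s t i2 0.

Definition Qf (R : fieldType) (A : 'M[R]_3) (s t : R) : R :=
  F2 A s t ^+ 2 - F1 A s t * F3 A s t.

(* Main.v *)
Require Import Defs.
From HB Require Import structures.
From mathcomp Require Import all_boot all_order all_algebra.
From mathcomp Require Import ring.
Import GRing.Theory.
Local Open Scope ring_scope.

Lemma AV (R : fieldType) (A : 'M[R]_3) s t i :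
  (A *m Vvec s t) i 0 = A i i0 * s ^+ 2 + A i i1 * (s * t) + A i i2 * t ^+ 2.
Proof.
rewrite !mxE !big_ord_recl big_ord0 !mxE /=.
rewrite addr0 addrA.
by congr (A i _ * _ + A i _ * _ + A i _ * _); apply/val_inj.
Qed.
Lemma BV (R : fieldType) s t i :
  (Bmx R *m Vvec s t) i 0 = if i == i1 then s * t else 0.
Proof.
rewrite !mxE !big_ord_recl big_ord0 /Bmx !mxE /=.
case: i => [[|[|[|i]]] Hi] //=; rewrite /i1 /=; ring.
Qed.
Lemma F1E (R : fieldType) (A : 'M[R]_3) s t :
  F1 A s t = - ((A i2 i0 * s ^+ 2 + A i2 i1 * (s * t) + A i2 i2 * t ^+ 2) * (s * t)).
Proof. rewrite /F1 /Fvec /cross !BV !AV mxE /=; ring. Qed.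
Lemma F2E (R : fieldType) (A : 'M[R]_3) s t : F2 A s t = 0.
Proof. rewrite /F2 /Fvec /cross !BV !AV mxE /=; ring. Qed.
Lemma F3E (R : fieldType) (A : 'M[R]_3) s t :
  F3 A s t = (A i0 i0 * s ^+ 2 + A i0 i1 * (s * t) + A i0 i2 * t ^+ 2) * (s * t).
Proof. rewrite /F3 /Fvec /cross !BV !AV mxE /=; ring. Qed.

Theorem theorem10 (R : fieldType) (A : 'M[R]_3) (k l : int -> R) :
  A^T = A ->
  (forall n, k n != 0) -> (forall n, l n != 0) ->
  (forall n : int, k (n + 1) * k (n - 1) =
      A i0 i2 * k n ^+ 2 + A i1 i2 * k n * l n + A i2 i2 * l n ^+ 2) ->
  (forall n : int, l (n + 1) * l (n - 1) =
      A i0 i0 * k n ^+ 2 + A i0 i1 * k n * l n + A i0 i2 * l n ^+ 2) ->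
  let r := fun n : int => - (k (n + 1) * l (n + 1) * k n * l n) in
  let s := k in
  let t := l in
  forall n : int,
    [/\ r n * r (n - 1) = Qf A (s n) (t n),
        s (n + 1) * r (n - 1) = t (n - 1) * F1 A (s n) (t n) - s (n - 1) * F2 A (s n) (t n)
      & t (n + 1) * r (n - 1) = t (n - 1) * F2 A (s n) (t n) - s (n - 1) * F3 A (s n) (t n)].
Proof.
move=> HA _ _ Hk Hl r s t n.
have S20 : A i2 i0 = A i0 i2 by rewrite -{1}HA mxE.
have S21 : A i2 i1 = A i1 i2 by rewrite -{1}HA mxE.
rewrite /r /s /t /Qf F1E F2E F3E S20 S21 subrK.
move: (Hk n) (Hl n) => E1 E2.
split.
- have -> : - (k (n + 1) * l (n + 1) * k n * l n) * - (k n * l n * k (n - 1) * l (n - 1))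
   = (k (n + 1) * k (n - 1)) * (l (n + 1) * l (n - 1)) * (k n * l n) ^+ 2 by ring.
  rewrite E1 E2; ring.
- have -> : k (n + 1) * - (k n * l n * k (n - 1) * l (n - 1))
   = - ((k (n + 1) * k (n - 1)) * l (n - 1) * (k n * l n)) by ring.
  rewrite E1; ring.
- have -> : l (n + 1) * - (k n * l n * k (n - 1) * l (n - 1))
   = - ((l (n + 1) * l (n - 1)) * k (n - 1) * (k n * l n)) by ring.
  rewrite E2; ring.
Qed.
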